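(* For $n\ge1$ let $u_n=\frac{1}{2n}\left(1-\frac{1}{2n}\right)^{2n-1}$ and $v_n=\frac{1}{2n+1}\left(1-\frac{1}{2n+1}\right)^{2n+1}$. Then for all $n\ge1$, $$\sum_{i=1}^n (2i-1)^{2i-1}u_n^{2i-1}<1\qquad\text{and}\qquad \sum_{i=1}^n (2i)^{2i+1}v_n^{2i-1}<1.$$ *)

(* Defs.v *)
From mathcomp Require Import all_boot all_order all_algebra.
Set Implicit Arguments. Unset Strict Implicit. Unset Printing Implicit Defensive.
Import Order.TTheory GRing.Theory Num.Theory.
Local Open Scope ring_scope.

Definition u_seq (R : realFieldType) (n : nat) : R :=
  ((2 * n)%:R)^-1 * (1 - ((2 * n)%:R)^-1) ^+ (2 * n).-1.

Definition v_seq (R : realFieldType) (n : nat) : R :=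
  ((2 * n).+1%:R)^-1 * (1 - ((2 * n).+1%:R)^-1) ^+ (2 * n).+1.

(* Main.v *)
Require Import Defs.
From mathcomp Require Import all_boot all_order all_algebra.
From mathcomp Require Import ring lra zify.
Import Order.TTheory GRing.Theory Num.Theory.
Local Open Scope ring_scope.
Set Implicit Arguments. Unset Strict Implicit.

Lemma bern1 (R : realFieldType) (y : R) k : 0 <= y -> 1 + k%:R * y <= (1 + y) ^+ k.
Proof.
move=> hy; elim: k => [|k IH]; first by rewrite mul0r addr0 expr0.
rewrite [(1 + y) ^+ k.+1]exprS -natr1.
have h0 : 0 <= (k%:R : R) by [].
nra.
Qed.

Lemma bern2 (R : realFieldType) (y : R) k : 0 <= y ->
  1 + k%:R * y + (k%:R * (k%:R - 1) / 2) * y ^+ 2 <= (1 + y) ^+ k.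
Proof.
move=> hy; elim: k => [|k IH]; first by rewrite !mul0r !addr0 expr0.
rewrite [(1 + y) ^+ k.+1]exprS -natr1.
have hk : 0 <= (k%:R : R) * (k%:R - 1).
  case: k {IH} => [|k]; first by rewrite mul0r.
  rewrite -natr1; have hk0 : 0 <= (k%:R : R) by []. nra.
have h2 : 0 <= y ^+ 2 by rewrite exprn_ge0.
have h3 : 0 <= (k%:R * (k%:R - 1) / 2) * y ^+ 2 * y.
  by apply: mulr_ge0 => //; apply: mulr_ge0 => //; apply: divr_ge0.
have e : (1 + y) * (1 + k%:R * y + (k%:R * (k%:R - 1) / 2) * y ^+ 2) =
  1 + (k%:R + 1) * y + ((k%:R + 1) * (k%:R + 1 - 1) / 2) * y ^+ 2 + (k%:R * (k%:R - 1) / 2) * y ^+ 2 * y.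
  by rewrite expr2; field.
have hy1 : 0 <= 1 + y by lra.
have := ler_wpM2l hy1 IH; rewrite e => H. lra.
Qed.

Lemma half_bound (R : realFieldType) (m : nat) : (1 <= m)%N ->
  (1 - (m%:R : R)^-1) ^+ m <= 1/2.
Proof.
move=> hm.
have hm0 : (0 : R) < m%:R by rewrite ltr0n.
set y := (m%:R : R)^-1.
have hy : 0 <= y by rewrite /y invr_ge0 ltW.
have hy1 : y <= 1 by rewrite /y invr_le1 // ?ler1n // unitf_gt0.
have hmy : m%:R * y = 1 by rewrite /y divff // gt_eqF.
have B := @bern1 _ y m hy; rewrite hmy in B.
have P : (1 - y) ^+ m * (1 + y) ^+ m <= 1.
  rewrite -exprMn; apply: exprn_ile1; nra.
have X : 0 <= (1 - y) ^+ m by apply: exprn_ge0; lra.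
nra.
Qed.

Lemma five12_bound (R : realFieldType) (p : nat) : (5 <= p)%N ->
  (1 - (p%:R : R)^-1) ^+ p <= 5/12.
Proof.
move=> hm.
have hm0 : (0 : R) < p%:R by rewrite ltr0n; apply: leq_trans hm.
have hp5 : (5 : R) <= p%:R by rewrite (ler_nat R 5 p).
set y := (p%:R : R)^-1.
have hy : 0 <= y by rewrite /y invr_ge0 ltW.
have hmy : p%:R * y = 1 by rewrite /y divff // gt_eqF.
have hy5 : y <= 1/5.
  have : y * 5 <= y * p%:R by apply: ler_wpM2l.
  lra.
have B := @bern2 _ y p hy.
have E : (p%:R * (p%:R - 1) / 2) * y ^+ 2 = (1 - y) / 2.
  rewrite expr2; have -> : (p%:R * (p%:R - 1) / 2) * (y * y) = (p%:R * y) * (p%:R * y - y) / 2 by ring.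
  by rewrite hmy; ring.
rewrite E hmy in B.
have P : (1 - y) ^+ p * (1 + y) ^+ p <= 1.
  rewrite -exprMn; apply: exprn_ile1; nra.
have X : 0 <= (1 - y) ^+ p by apply: exprn_ge0; lra.
nra.
Qed.
Definition V (R : realFieldType) n (v : R) :=
  \sum_(1 <= i < n.+1) ((2 * i)%:R) ^+ (2 * i).+1 * v ^+ (2 * i).-1.

Lemma Vmono (R : realFieldType) n (v r : R) : 0 <= v -> v <= r -> V n v <= V n r.
Proof.
move=> h0 h1; apply: ler_sum => i _; apply: ler_wpM2l; first exact: exprn_ge0.
apply: lerXn2r => //; rewrite nnegrE //; exact: le_trans h1.
Qed.

Lemma v_ge0 (R : realFieldType) n : 0 <= v_seq R n.
Proof.
rewrite /v_seq; apply: mulr_ge0; first by rewrite invr_ge0.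
apply: exprn_ge0; rewrite subr_ge0 invr_le1 ?ler1n ?unitf_gt0 ?ltr0n //.
Qed.

Lemma term_bound (R : realFieldType) (J a p v : R) (j : nat) : (2 <= j)%N ->
  0 < p -> 0 <= v -> v <= p^-1 * a -> 0 <= a -> 0 <= J -> J <= p ->
  J ^+ j.+1 * v ^+ j.-1 <= J ^+ 3 * a ^+ j.-1 * p^-1.
Proof.
case: j => [|[|e]] // _ hp hv hva ha hJ hJp.
have hpi : 0 <= p^-1 by rewrite invr_ge0 ltW.
apply: le_trans (_ : J ^+ e.+3 * (p^-1 * a) ^+ e.+1 <= _).
  apply: ler_wpM2l; first exact: exprn_ge0.
  by apply: lerXn2r => //; rewrite nnegrE //; apply: mulr_ge0.
have E : J ^+ e.+3 * (p^-1 * a) ^+ e.+1 = J ^+ 3 * a ^+ e.+1 * p^-1 * (J / p) ^+ e.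
  rewrite -addn3 exprD !exprS !exprMn exprVn; field.
  by rewrite expf_neq0 // gt_eqF.
rewrite E /=.
have h1 : (J / p) ^+ e <= 1.
  apply: exprn_ile1; first by apply: divr_ge0 => //; apply: ltW.
  by rewrite ler_pdivrMr // mul1r.
have h0 : 0 <= J ^+ 3 * a ^+ e.+1 * p^-1.
  by apply: mulr_ge0 => //; apply: mulr_ge0; apply: exprn_ge0.
have := ler_wpM2l h0 h1; rewrite mulr1 //.
Qed.

Definition aa (R : realFieldType) : R := 5 / 12.
Definition bb (R : realFieldType) (i : nat) : R := (2 * i)%:R ^+ 3 * (aa R) ^+ (2 * i).-1.
Definition BB (R : realFieldType) (n : nat) : R := \sum_(1 <= i < n.+1) bb R i.

Lemma bb_step (R : realFieldType) n : (5 <= n)%N -> bb R n.+1 <= bb R n / 3.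
Proof.
move=> hn; rewrite /bb /aa.
have -> : ((2 * n.+1).-1 = 2 + (2 * n).-1)%N by case: n hn => // m _; rewrite !mulnS.
rewrite exprD.
have -> : (2 * n.+1)%:R = 2 * (n%:R : R) + 2 by rewrite natrM -natr1; ring.
rewrite natrM.
have hN : (5 : R) <= n%:R by rewrite (ler_nat R 5 n).
set X := (5 / 12 : R) ^+ (2 * n).-1.
have hX : 0 <= X by rewrite /X; apply: exprn_ge0; lra.
set N := (n%:R : R).
have key : 25 * (N + 1) ^+ 3 <= 48 * N ^+ 3.
  have h5 : 0 <= N - 5 by lra.
  have : 0 <= (N - 5) * (23 * N ^+ 2 + 40 * N + 125) by apply: mulr_ge0 => //; nra.
  rewrite !expr2 !exprS expr0; nra.
have : 0 <= X * (48 * N ^+ 3 - 25 * (N + 1) ^+ 3) by apply: mulr_ge0 => //; lra.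
rewrite !exprS expr0. nra.
Qed.

Lemma bb_ge0 (R : realFieldType) i : 0 <= bb R i.
Proof. rewrite /bb /aa; apply: mulr_ge0; apply: exprn_ge0 => //; lra. Qed.

Lemma BB_bound (R : realFieldType) k : BB R (k + 5) + bb R (k + 5) / 2 <= 62 / 5.
Proof.
elim: k => [|k IH].
  rewrite /BB /bb /aa /=; do 5 rewrite big_nat_recr //; rewrite big_geq //=.
  rewrite ?mul1n ?mul2n ?doubleS ?double0 /=.
  lra.
rewrite addSn /BB big_nat_recr //= -/(BB R (k + 5)).
have := bb_step R (leq_addl k 5).
have := bb_ge0 R (k + 5).
lra.
Qed.

Lemma vcase_lem (R : realFieldType) n (r : R) :
  v_seq R n <= r -> V n r < 1 -> V n (v_seq R n) < 1.
Proof. by move=> h1 h2; apply: le_lt_trans (Vmono n (v_ge0 R n) h1) h2. Qed.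

Ltac vtac1 :=
    rewrite /v_seq ?mul1n ?mul2n ?doubleS ?double0 /=;
    match goal with |- context [1 - (?x%:R)^-1] =>
      rewrite (_ : 1 - (x%:R)^-1 = (x%:R - 1) / x%:R); last by field end; lra.

Ltac vtac2 :=
  rewrite /V; repeat (rewrite big_nat_recr; last done); rewrite big_geq //= ?mul1n ?mul2n ?doubleS ?double0 /=;
  lra.

Lemma u_key (R : realFieldType) m : (1 <= m)%N ->
  (m.-1)%:R * ((m%:R : R)^-1 * (1 - (m%:R)^-1) ^+ m.-1) <= 1/2.
Proof.
case: m => [|m] // _ /=; rewrite mulrA.
have -> : (m%:R : R) * (m.+1%:R)^-1 = 1 - (m.+1%:R)^-1.
  rewrite -natr1; field.
  have : (0 : R) < m%:R + 1 by rewrite natr1 ltr0n.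
  by move=> h; rewrite gt_eqF.
rewrite -exprS; exact: half_bound.
Qed.

Lemma geo (R : realFieldType) n : \sum_(1 <= i < n.+1) (1/2 : R) ^+ i = 1 - (1/2) ^+ n.
Proof.
elim: n => [|n IH]; first by rewrite big_geq // expr0 subrr.
rewrite big_nat_recr // IH !exprS /=; lra.
Qed.

Lemma upart (R : realFieldType) (n : nat) (hn : (1 <= n)%N) :
  \sum_(1 <= i < n.+1) ((2 * i).-1%:R) ^+ (2 * i).-1 * (u_seq R n) ^+ (2 * i).-1 < 1.
Proof.
have hu0 : 0 <= u_seq R n.
  rewrite /u_seq; apply: mulr_ge0; first by rewrite invr_ge0.
  apply: exprn_ge0; rewrite subr_ge0.
  case: n hn => // n _; rewrite invr_le1 ?ler1n ?unitf_gt0 ?ltr0n //.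
have hm : (1 <= 2 * n)%N by rewrite (leq_trans hn) // leq_pmull.
have hK := u_key R hm.
apply: le_lt_trans (_ : \sum_(1 <= i < n.+1) (1/2 : R) ^+ i < 1).
  apply: ler_sum_nat => i /andP[hi1 hin].
  rewrite -exprMn.
  have hk : (2 * i).-1%:R * u_seq R n <= 1/2.
    apply: le_trans hK; rewrite -/(u_seq R n).
    apply: ler_wpM2r => //; rewrite ler_nat -!subn1 leq_sub2r // leq_mul2l.
    by rewrite -ltnS.
  have hk0 : 0 <= (2 * i).-1%:R * u_seq R n by apply: mulr_ge0.
  apply: le_trans (_ : (1/2) ^+ (2 * i).-1 <= _).
    by apply: lerXn2r => //; rewrite nnegrE //; lra.
  apply: ler_wiXn2l; try lra.
  case: i hi1 {hin hk hk0} => // i _; rewrite mulnS /=. lia.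
rewrite geo; have : 0 < (1/2 : R) ^+ n by apply: exprn_gt0; lra.
lra.
Qed.

Lemma vgeneral (R : realFieldType) (N : nat) : (6 <= N)%N ->
  V N (v_seq R N) < 1.
Proof.
move=> hN.
set p := (2 * N).+1.
have hp5 : (5 <= p)%N by rewrite /p; lia.
have hp0 : (0 : R) < p%:R by rewrite ltr0n.
have hv : v_seq R N <= p%:R^-1 * aa R.
  rewrite /v_seq -/p; apply: ler_wpM2l; first by rewrite invr_ge0 ltW.
  exact: five12_bound.
have hv0 := v_ge0 R N.
apply: le_lt_trans (_ : \sum_(1 <= i < N.+1) bb R i * p%:R^-1 < 1).
  apply: ler_sum_nat => i /andP[hi1 hin].
  rewrite /bb; apply: term_bound => //.
  - lia.
  - by rewrite /aa; lra.
  - by rewrite ler_nat /p; lia.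
rewrite -mulr_suml -/(BB R N).
have hB : BB R N <= 62/5.
  have := BB_bound R (N - 5); rewrite subnK; last by lia.
  have := bb_ge0 R N; lra.
have hp13 : (13 : R) <= p%:R.
  by rewrite (ler_nat R 13 p) /p; lia.
rewrite ltr_pdivrMr // mul1r; lra.
Qed.

Theorem lemma8p5 (R : realFieldType) (n : nat) (hn : (1 <= n)%N) :
  \sum_(1 <= i < n.+1) ((2 * i).-1%:R) ^+ (2 * i).-1 * (u_seq R n) ^+ (2 * i).-1 < 1
  /\
  \sum_(1 <= i < n.+1) ((2 * i)%:R) ^+ (2 * i).+1 * (v_seq R n) ^+ (2 * i).-1 < 1.
Proof.
split; first exact: upart.
rewrite -/(V n (v_seq R n)).
case: n hn => [|[|[|[|[|[|n]]]]]] // _; last by apply: vgeneral.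
- apply: (@vcase_lem R 1 (99/1000)); [vtac1 | vtac2].
- apply: (@vcase_lem R 2 (41/625)); [vtac1 | vtac2].
- apply: (@vcase_lem R 3 (243/5000)); [vtac1 | vtac2].
- apply: (@vcase_lem R 4 (77/2000)); [vtac1 | vtac2].
- apply: (@vcase_lem R 5 (4/125)); [vtac1 | vtac2].
Qed.
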